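(* Every simply typable term of $\Lambda J$ (i.e. every $t\in\mathtt T_J$ such that $\Gamma\vdash t:A$ is derivable in the simple type system below for some $\Gamma$ and $A$) is strongly normalizing for $\to_{d\beta}$, i.e. $t\in SN_{d\beta}$.
   Context: Terms $\mathtt T_J$: $t,u,r ::= x \mid \lambda x.t \mid t(u,y.r)$ (generalized application; $y$ is bound in $r$), taken up to $\alpha$-equivalence; $\{u/x\}t$ is capture-avoiding substitution and $\mathrm{fv}(t)$ the free variables. List contexts: $\mathtt D ::= \Diamond \mid t(u,y.\mathtt D)$, with $\mathtt D\langle s\rangle$ the term obtained by replacing the hole by $s$. The distant beta rule is $\mathtt D\langle\lambda x.t\rangle(u,y.r) \mapsto_{d\beta} \{\{u/x\}\mathtt D\langle t\rangle/y\}r$ (by $\alpha$-conversion, variables bound by $\mathtt D$ are not free in $u$ and $x$ does not occur in $\mathtt D$), and $\to_{d\beta}$ is its closure under all term contexts. $SN_{d\beta}$ is the set of terms admitting no infinite $\to_{d\beta}$-sequence. Simple types $A,B,C ::= \alpha \mid A\to B$; contexts $\Gamma$ are finite maps from variables to simple types; rules: $\Gamma,x:A\vdash x:A$; from $\Gamma,x:A\vdash t:B$ infer $\Gamma\vdash\lambda x.t:A\to B$; from $\Gamma\vdash t:A\to B$, $\Gamma\vdash u:A$ and $\Gamma,y:B\vdash r:C$ infer $\Gamma\vdash t(u,y.r):C$. *)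

(* Defs.v *)
(* Terms of Lambda-J in de Bruijn notation (alpha-equivalence is
   syntactic equality). *)
From Stdlib Require Import Arith List.

Inductive term : Type :=
| Var : nat -> term
| Lam : term -> term                  (* \x.t, x = index 0 in t *)
| GApp : term -> term -> term -> term (* t(u, y.r), y = index 0 in r *).

Fixpoint lift (k c : nat) (t : term) : term :=
  match t with
  | Var n => if Nat.ltb n c then Var n else Var (n + k)
  | Lam b => Lam (lift k (S c) b)
  | GApp t u r => GApp (lift k c t) (lift k c u) (lift k (S c) r)
  end.

(* subst j s t : capture-avoiding substitution of s for index j in t,
   indices > j are decremented (the binder of j disappears). *)
Fixpoint subst (j : nat) (s : term) (t : term) : term :=
  match t with
  | Var n =>
      if Nat.ltb n j then Var n
      else if Nat.eqb n j then lift j 0 s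
      else Var (n - 1)
  | Lam b => Lam (subst (S j) s b)
  | GApp t u r => GApp (subst j s t) (subst j s u) (subst (S j) s r)
  end.

(* List contexts D ::= <> | t(u, y.D); the hole lies under the binder y. *)
Inductive lctx : Type :=
| Hole : lctx
| DApp : term -> term -> lctx -> lctx.

Fixpoint plug (D : lctx) (s : term) : term :=
  match D with
  | Hole => s
  | DApp t u D' => GApp t u (plug D' s)
  end.

Fixpoint depth (D : lctx) : nat :=
  match D with
  | Hole => 0
  | DApp _ _ D' => S (depth D')
  end.

(* Root distant beta:  D<\x.t>(u, y.r) |-> {{u/x}D<t> / y} r.
   Since x does not occur in D, {u/x}D<t> = D<{u/x}t>, where inside D
   (under depth D binders) u must be lifted by depth D. *)
Inductive dbeta_root : term -> term -> Prop :=
| dbeta_intro : forall D t u r,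
    dbeta_root (GApp (plug D (Lam t)) u r)
               (subst 0 (plug D (subst 0 (lift (depth D) 0 u) t)) r).

Inductive dbeta : term -> term -> Prop :=
| db_root : forall t t', dbeta_root t t' -> dbeta t t'
| db_lam : forall t t', dbeta t t' -> dbeta (Lam t) (Lam t')
| db_app1 : forall t t' u r, dbeta t t' -> dbeta (GApp t u r) (GApp t' u r)
| db_app2 : forall t u u' r, dbeta u u' -> dbeta (GApp t u r) (GApp t u' r)
| db_app3 : forall t u r r', dbeta r r' -> dbeta (GApp t u r) (GApp t u r').

Inductive SN (R : term -> term -> Prop) : term -> Prop :=
| SN_intro : forall t, (forall t', R t t' -> SN R t') -> SN R t.

Definition SN_dbeta (t : term) : Prop := SN dbeta t.

Inductive ty : Type :=
| TVar : nat -> ty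
| Arr : ty -> ty -> ty.

(* Contexts: list of types, index n gets the n-th entry (de Bruijn). *)
Definition ctx := list ty.

Inductive typing : ctx -> term -> ty -> Prop :=
| ty_var : forall G n A, nth_error G n = Some A -> typing G (Var n) A
| ty_lam : forall G t A B, typing (A :: G) t B -> typing G (Lam t) (Arr A B)
| ty_app : forall G t u r A B C,
    typing G t (Arr A B) -> typing G u A -> typing (B :: G) r C ->
    typing G (GApp t u r) C.

(* Main.v *)
Require Import Defs.
From Stdlib Require Import Arith List Lia.
Import ListNotations.

Ltac cmp1 := match goal with
  | |- context [Nat.ltb ?a ?b] => destruct (Nat.ltb_spec a b)
  | |- context [Nat.eqb ?a ?b] => destruct (Nat.eqb_spec a b)
  end.
Ltac vs := repeat (progress cbn [lift subst] || cmp1);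
  try (exfalso; lia); try (f_equal; lia).

Lemma lift_0 : forall t c, lift 0 c t = t.
Proof. induction t; intros; cbn [lift]; [vs| f_equal; auto | f_equal; auto]. Qed.

Lemma simpl_lift : forall M n k p i, k <= i <= k + n ->
  lift p i (lift n k M) = lift (p + n) k M.
Proof.
  induction M; intros; cbn [lift].
  - vs.
  - f_equal; apply IHM; lia.
  - f_equal; [apply IHM1|apply IHM2|apply IHM3]; lia.
Qed.

Lemma permute_lift : forall M n k p i, i <= k ->
  lift p i (lift n k M) = lift n (p + k) (lift p i M).
Proof.
  induction M; intros; cbn [lift].
  - vs.
  - f_equal. rewrite IHM by lia. f_equal; lia.
  - rewrite IHM1, IHM2, IHM3 by lia. f_equal. f_equal; lia.
Qed.

Lemma simpl_subst : forall M N n p k, p <= n + k -> k <= p ->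
  subst p N (lift (S n) k M) = lift n k M.
Proof.
  induction M as [m| M IHM | M1 IHM1 M2 IHM2 M3 IHM3]; intros; cbn [lift subst].
  - vs.
  - f_equal; apply IHM; lia.
  - f_equal; [apply IHM1|apply IHM2|apply IHM3]; lia.
Qed.

Lemma commut_lift_subst : forall M N n p k, k <= p ->
  lift n k (subst p N M) = subst (n + p) N (lift n k M).
Proof.
  induction M as [m| M IHM | M1 IHM1 M2 IHM2 M3 IHM3]; intros; cbn [lift subst].
  - repeat (progress cbn [lift subst] || cmp1); try (exfalso; lia); try (f_equal; lia).
    subst. rewrite simpl_lift by lia. f_equal; lia.
  - f_equal. rewrite IHM by lia. f_equal; lia.
  - rewrite IHM1, IHM2, IHM3 by lia. f_equal. f_equal; lia.
Qed.

Lemma distr_lift_subst : forall M N n p k,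
  lift n (p + k) (subst p N M) = subst p (lift n k N) (lift n (S (p + k)) M).
Proof.
  induction M as [m| M IHM | M1 IHM1 M2 IHM2 M3 IHM3]; intros; cbn [lift subst].
  - repeat (progress cbn [lift subst] || cmp1); try (exfalso; lia); try (f_equal; lia).
    subst. rewrite (permute_lift N n k p 0) by lia. reflexivity.
  - f_equal. apply (IHM N n (S p) k).
  - f_equal; [apply IHM1|apply IHM2|apply (IHM3 N n (S p) k)].
Qed.

Lemma distr_subst : forall M N P n p,
  subst (p + n) P (subst p N M) = subst p (subst n P N) (subst (S (p + n)) P M).
Proof.
  induction M as [m| M IHM | M1 IHM1 M2 IHM2 M3 IHM3]; intros; cbn [lift subst].
  - repeat (progress cbn [lift subst] || cmp1); try (exfalso; lia); try (f_equal; lia).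
    + subst. rewrite commut_lift_subst by lia. f_equal; lia.
    + subst. rewrite simpl_subst by lia. f_equal; lia.
  - f_equal. apply (IHM N P n (S p)).
  - f_equal; [apply IHM1|apply IHM2|apply (IHM3 N P n (S p))].
Qed.

Fixpoint liftD (n k : nat) (D : lctx) : lctx :=
  match D with
  | Hole => Hole
  | DApp t u D' => DApp (lift n k t) (lift n k u) (liftD n (S k) D')
  end.

Fixpoint substD (j : nat) (s : term) (D : lctx) : lctx :=
  match D with
  | Hole => Hole
  | DApp t u D' => DApp (subst j s t) (subst j s u) (substD (S j) s D')
  end.

Lemma depth_liftD : forall D n k, depth (liftD n k D) = depth D.
Proof. induction D; simpl; auto. Qed.

Lemma depth_substD : forall D j s, depth (substD j s D) = depth D.
Proof. induction D; simpl; auto. Qed.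

Lemma lift_plug : forall D n k s,
  lift n k (plug D s) = plug (liftD n k D) (lift n (depth D + k) s).
Proof.
  induction D; intros; simpl; auto.
  rewrite IHD. do 2 f_equal. f_equal. lia.
Qed.

Lemma subst_plug : forall D j v s,
  subst j v (plug D s) = plug (substD j v D) (subst (depth D + j) v s).
Proof.
  induction D; intros; simpl; auto.
  rewrite IHD. do 2 f_equal. f_equal. lia.
Qed.

Lemma subst_var0 : forall X, subst 0 X (Var 0) = X.
Proof. intros. cbn [subst]. simpl. apply lift_0. Qed.

Lemma lift_step : forall t t', dbeta t t' -> forall n k, dbeta (lift n k t) (lift n k t').
Proof.
  induction 1; intros n k; cbn [lift]; try (constructor; auto; fail).
  destruct H as [D s u r].
  pose proof (dbeta_intro (liftD n k D) (lift n (S (depth D + k)) s) (lift n k u) (lift n (S k) r)) as H.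
  rewrite depth_liftD in H.
  apply db_root.
  cbn [lift]. rewrite lift_plug. cbn [lift].
  pose proof (distr_lift_subst r (plug D (subst 0 (lift (depth D) 0 u) s)) n 0 k) as E.
  simpl in E. rewrite E. rewrite lift_plug.
  pose proof (distr_lift_subst s (lift (depth D) 0 u) n 0 (depth D + k)) as E2.
  simpl in E2. rewrite E2.
  rewrite <- (permute_lift u n k (depth D) 0) by lia.
  exact H.
Qed.

Lemma subst_step : forall t t', dbeta t t' -> forall j v, dbeta (subst j v t) (subst j v t').
Proof.
  induction 1; intros j v; cbn [subst]; try (constructor; auto; fail).
  destruct H as [D s u r].
  pose proof (dbeta_intro (substD j v D) (subst (S (depth D + j)) v s) (subst j v u) (subst (S j) v r)) as H.
  rewrite depth_substD in H.
  apply db_root.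
  cbn [subst]. rewrite subst_plug. cbn [subst].
  pose proof (distr_subst r (plug D (subst 0 (lift (depth D) 0 u) s)) v j 0) as E.
  simpl in E. rewrite E. rewrite subst_plug.
  pose proof (distr_subst s (lift (depth D) 0 u) v (depth D + j) 0) as E2.
  simpl in E2. rewrite E2.
  rewrite <- (commut_lift_subst u v (depth D) j 0) by lia.
  exact H.
Qed.

Inductive star : term -> term -> Prop :=
| st_refl : forall t, star t t
| st_step : forall a b c, dbeta a b -> star b c -> star a c.

Lemma star_trans : forall a b c, star a b -> star b c -> star a c.
Proof. induction 1; intros; auto. eapply st_step; eauto. Qed.

Lemma star_one : forall a b, dbeta a b -> star a b.
Proof. intros; eapply st_step; eauto. constructor. Qed.

Lemma star_map : forall f, (forall x y, dbeta x y -> dbeta (f x) (f y)) ->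
  forall a b, star a b -> star (f a) (f b).
Proof. intros f Hf; induction 1; [constructor| eapply st_step; eauto]. Qed.

Lemma subst_star_arg : forall s j u u', dbeta u u' -> star (subst j u s) (subst j u' s).
Proof.
  induction s as [m| s IH | s1 IH1 s2 IH2 s3 IH3]; intros j u u' H; cbn [subst].
  - destruct (m <? j); [constructor|]. destruct (m =? j); [|constructor].
    apply star_one, lift_step; auto.
  - apply (star_map Lam); [intros; apply db_lam; auto | auto].
  - eapply star_trans; [apply (star_map (fun x => GApp x _ _)); [intros; apply db_app1; auto| apply IH1; eauto]|].
    eapply star_trans; [apply (star_map (fun x => GApp _ x _)); [intros; apply db_app2; auto| apply IH2; eauto]|].
    apply (star_map (fun x => GApp _ _ x)); [intros; apply db_app3; auto| apply IH3; eauto].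
Qed.

Lemma SN_step : forall t t', SN dbeta t -> dbeta t t' -> SN dbeta t'.
Proof. intros t t' H; destruct H; auto. Qed.

Lemma SN_star : forall t t', SN dbeta t -> star t t' -> SN dbeta t'.
Proof. intros t t' H Hs; induction Hs; auto. apply IHHs. eapply SN_step; eauto. Qed.

Lemma SN_back : forall f, (forall x y, dbeta x y -> dbeta (f x) (f y)) ->
  forall x, SN dbeta (f x) -> SN dbeta x.
Proof.
  intros f Hf x H. remember (f x) as y. revert x Heqy.
  induction H as [y Hy IH]. intros x ->. constructor. intros x' Hx.
  eapply IH; [apply Hf; exact Hx | reflexivity].
Qed.

Fixpoint apps (w : term) (l : list term) : term :=
  match l with
  | [] => w
  | v :: l' => GApp (apps w l') v (Var 0)
  end.

Inductive args_step : list term -> list term -> Prop :=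
| as_here : forall v v' l, dbeta v v' -> args_step (v :: l) (v' :: l)
| as_there : forall v l l', args_step l l' -> args_step (v :: l) (v :: l').

Lemma apps_step : forall l w w', dbeta w w' -> dbeta (apps w l) (apps w' l).
Proof. induction l; simpl; intros; auto. apply db_app1; auto. Qed.

Lemma apps_args_step : forall l l' w, args_step l l' -> dbeta (apps w l) (apps w l').
Proof. induction 1; simpl; [apply db_app2 | apply db_app1]; auto. Qed.

Lemma apps_app : forall l v w, apps w (l ++ [v]) = apps (GApp w v (Var 0)) l.
Proof. induction l; simpl; intros; auto. rewrite IHl; auto. Qed.

Lemma no_step_var : forall n z, ~ dbeta (Var n) z.
Proof. intros n z H. inversion H. inversion H0. Qed.

Lemma step_lam : forall s z, dbeta (Lam s) z -> exists s', dbeta s s' /\ z = Lam s'.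
Proof. intros s z H. inversion H; subst. inversion H0. eauto. Qed.

Lemma plug_var : forall D s n, plug D (Lam s) <> Var n.
Proof. destruct D; simpl; discriminate. Qed.

Lemma plug_lam : forall D s s', plug D (Lam s) = Lam s' -> D = Hole /\ s = s'.
Proof. destruct D; simpl; intros; [inversion H; auto | discriminate]. Qed.

Lemma INV : forall l w z, dbeta (apps w l) z ->
  (exists w', dbeta w w' /\ z = apps w' l) \/
  (exists l', args_step l l' /\ z = apps w l') \/
  (exists l0 v D s, l = l0 ++ [v] /\ w = plug D (Lam s) /\
      z = apps (plug D (subst 0 (lift (depth D) 0 v) s)) l0).
Proof.
  induction l as [|v l IH]; simpl; intros w z H.
  - left; eauto.
  - inversion H; subst.
    + inversion H0; subst. destruct l as [|v' l'].
      * right; right. exists [], v, D, t. simpl in *. auto. split; auto. split; auto. apply lift_0.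
      * exfalso. simpl in H2. destruct D; simpl in H2; [discriminate|].
        inversion H2. eapply plug_var; eauto.
    + destruct (IH _ _ H4) as [[w' [H1 ->]]|[[l' [H1 ->]]|[l0 [v0 [D [s [-> [-> ->]]]]]]]].
      * left; eauto.
      * right; left. exists (v :: l'); split; [apply as_there|]; auto.
      * right; right. exists (v :: l0), v0, D, s. auto.
    + right; left. exists (u' :: l); split; [apply as_here|]; auto.
    + exfalso; eapply no_step_var; eauto.
Qed.

Definition args_inv (y x : list term) : Prop := args_step x y.

Lemma acc_cons : forall a, SN dbeta a -> forall l, Acc args_inv l -> Acc args_inv (a :: l).
Proof.
  induction 1 as [a Ha IHa]. intros l Hl. induction Hl as [l Hl IHl].
  constructor. intros y Hy. unfold args_inv in Hy. inversion Hy; subst.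
  - apply IHa; auto. constructor; auto.
  - apply IHl; auto.
Qed.

Lemma args_acc : forall l, Forall (SN dbeta) l -> Acc args_inv l.
Proof.
  induction 1.
  - constructor. intros y Hy. inversion Hy.
  - apply acc_cons; auto.
Qed.

Lemma SN_apps_var : forall n l, Forall (SN dbeta) l -> SN dbeta (apps (Var n) l).
Proof.
  intros n l H. apply args_acc in H. induction H as [l Hl IH].
  constructor. intros z Hz. apply INV in Hz.
  destruct Hz as [[w' [H1 ->]]|[[l' [H1 ->]]|[l0 [v0 [D [s [_ [H1 _]]]]]]]].
  - exfalso; eapply no_step_var; eauto.
  - apply IH; auto.
  - exfalso; eapply plug_var; eauto.
Qed.

Lemma WHE : forall s, SN dbeta s -> forall u, SN dbeta u -> forall l,
  SN dbeta (apps (subst 0 u s) l) -> SN dbeta (apps (GApp (Lam s) u (Var 0)) l).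
Proof.
  induction 1 as [s Hs IHs]. induction 1 as [u Hu IHu]. intros l Hb.
  remember (apps (subst 0 u s) l) as b eqn:Eb. revert l Eb.
  induction Hb as [b Hb IHb]. intros l ->.
  constructor. intros z Hz. apply INV in Hz.
  destruct Hz as [[w' [Hw ->]]|[[l' [Hl ->]]|[l0 [v0 [D [s0 [_ [Hw ->]]]]]]]].
  - inversion Hw; subst.
    + inversion H; subst. apply plug_lam in H1. destruct H1; subst. simpl.
      rewrite !lift_0. constructor; auto.
    + apply step_lam in H3. destruct H3 as [s' [Hs' ->]].
      apply IHs; auto. constructor; auto.
      apply (SN_step (apps (subst 0 u s) l)); [constructor; auto|].
      apply apps_step, subst_step; auto.
    + apply IHu; auto.
      apply (SN_star (apps (subst 0 u s) l)); [constructor; auto|].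
      apply (star_map (fun x => apps x l)); [intros; apply apps_step; auto|].
      apply subst_star_arg; auto.
    + exfalso; eapply no_step_var; eauto.
  - eapply IHb; [|reflexivity]. apply apps_args_step; auto.
  - exfalso. destruct D as [|t1 u1 D']; simpl in Hw; [discriminate|].
    inversion Hw. eapply plug_var; eauto.
Qed.

Lemma KL : forall a, SN dbeta a -> forall t u, a = GApp t u (Var 0) -> forall r l,
  SN dbeta (apps (subst 0 a r) l) -> SN dbeta (apps (GApp t u r) l).
Proof.
  induction 1 as [a Ha IHa]. intros t u -> r l Hb.
  remember (apps (subst 0 (GApp t u (Var 0)) r) l) as b eqn:Eb. revert r l Eb.
  induction Hb as [b Hb IHb]. intros r l ->.
  constructor. intros z Hz. apply INV in Hz.
  destruct Hz as [[w' [Hw ->]]|[[l' [Hl ->]]|[l0 [v0 [D [s0 [-> [Hw ->]]]]]]]].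
  - inversion Hw; subst.
    + inversion H; subst.
      apply (SN_star (apps (subst 0 (GApp (plug D (Lam t0)) u (Var 0)) r) l)); [constructor; auto|].
      apply (star_map (fun x => apps x l)); [intros; apply apps_step; auto|].
      pose proof (subst_star_arg r 0 _ _ (db_root _ _ (dbeta_intro D t0 u (Var 0)))) as S. rewrite subst_var0 in S. exact S.
    + eapply IHa; [apply db_app1; eauto | reflexivity |].
      apply (SN_star (apps (subst 0 (GApp t u (Var 0)) r) l)); [constructor; auto|].
      apply (star_map (fun x => apps x l)); [intros; apply apps_step; auto|].
      apply subst_star_arg. apply db_app1; auto.
    + eapply IHa; [apply db_app2; eauto | reflexivity |].
      apply (SN_star (apps (subst 0 (GApp t u (Var 0)) r) l)); [constructor; auto|].
      apply (star_map (fun x => apps x l)); [intros; apply apps_step; auto|].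
      apply subst_star_arg. apply db_app2; auto.
    + eapply IHb; [|reflexivity]. apply apps_step, subst_step; auto.
  - eapply IHb; [|reflexivity]. apply apps_args_step; auto.
  - destruct D as [|t1 u1 D']; simpl in Hw; [discriminate|].
    inversion Hw; subst t1 u1 r. simpl.
    eapply IHb; [|reflexivity].
    rewrite apps_app. apply apps_step.
    rewrite !subst_plug. cbn [subst].
    set (a := GApp t u (Var 0)).
    pose proof (dbeta_intro (substD 0 a D') (subst (S (depth D' + 0)) a s0) v0 (Var 0)) as H.
    rewrite subst_var0, depth_substD in H.
    apply db_root. 
    replace (subst (depth D' + 0) a (subst 0 (lift (S (depth D')) 0 v0) s0))
      with (subst 0 (lift (depth D') 0 v0) (subst (S (depth D' + 0)) a s0)); [exact H|].
    pose proof (distr_subst s0 (lift (S (depth D')) 0 v0) a (depth D') 0) as E.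
    simpl in E. rewrite Nat.add_0_r. rewrite E. f_equal.
    symmetry; apply simpl_subst; lia.
Qed.

Fixpoint Rd (A : ty) (t : term) : Prop :=
  match A with
  | TVar _ => SN dbeta t
  | Arr A B => forall u, Rd A u -> Rd B (GApp t u (Var 0))
  end.

Lemma SN_apps_sub : forall l X, SN dbeta (apps X l) -> SN dbeta X.
Proof. intros l X. apply (SN_back (fun x => apps x l)). intros; apply apps_step; auto. Qed.

Lemma SN_subst_sub : forall u s, SN dbeta (subst 0 u s) -> SN dbeta s.
Proof. intros u s. apply (SN_back (subst 0 u)). intros; apply subst_step; auto. Qed.

Lemma SN_app_sub : forall t, SN dbeta (GApp t (Var 0) (Var 0)) -> SN dbeta t.
Proof. intros t. apply (SN_back (fun x => GApp x (Var 0) (Var 0))). intros; apply db_app1; auto. Qed.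

Lemma CR : forall A, (forall t, Rd A t -> SN dbeta t) /\ (forall n l, Forall (SN dbeta) l -> Rd A (apps (Var n) l)).
Proof.
  induction A as [k|A [IA1 IA2] B [IB1 IB2]]; split.
  - simpl; auto.
  - intros; simpl; apply SN_apps_var; auto.
  - intros t Ht. simpl in Ht. apply SN_app_sub. apply IB1. apply Ht.
    apply (IA2 0 nil). constructor.
  - intros n l Hl u Hu. change (Rd B (apps (Var n) (u :: l))). apply IB2.
    constructor; auto.
Qed.

Lemma WHE_R : forall B l s u, SN dbeta u -> Rd B (apps (subst 0 u s) l) ->
  Rd B (apps (GApp (Lam s) u (Var 0)) l).
Proof.
  induction B as [k|B1 IB1 B2 IB2]; simpl; intros l s u Hu H.
  - apply WHE; auto. apply (SN_subst_sub u). apply (SN_apps_sub l). auto.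
  - intros v Hv. change (Rd B2 (apps (GApp (Lam s) u (Var 0)) (v :: l))).
    apply IB2; auto. exact (H v Hv).
Qed.

Lemma KL_R : forall C l t u r, SN dbeta (GApp t u (Var 0)) ->
  Rd C (apps (subst 0 (GApp t u (Var 0)) r) l) -> Rd C (apps (GApp t u r) l).
Proof.
  induction C as [k|C1 IC1 C2 IC2]; simpl; intros l t u r Ha H.
  - exact (KL _ Ha t u eq_refl r l H).
  - intros v Hv. change (Rd C2 (apps (GApp t u r) (v :: l))).
    apply IC2; auto. exact (H v Hv).
Qed.

Definition scons (u : term) (sg : nat -> term) (n : nat) : term :=
  match n with 0 => u | S n => sg n end.
Definition up (sg : nat -> term) : nat -> term := scons (Var 0) (fun n => lift 1 0 (sg n)).
Fixpoint inst (sg : nat -> term) (t : term) : term :=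
  match t with
  | Var n => sg n
  | Lam b => Lam (inst (up sg) b)
  | GApp t u r => GApp (inst sg t) (inst sg u) (inst (up sg) r)
  end.
Fixpoint upn (k : nat) (sg : nat -> term) : nat -> term :=
  match k with 0 => sg | S k => up (upn k sg) end.

Lemma upn_spec : forall k sg n,
  upn k sg n = if n <? k then Var n else lift k 0 (sg (n - k)).
Proof.
  induction k; intros sg n.
  - simpl. rewrite lift_0, Nat.sub_0_r. auto.
  - simpl. unfold up, scons. destruct n.
    + cmp1; [auto|lia].
    + rewrite IHk. cmp1; cmp1; try lia.
      * cbn [lift]. cmp1; [lia|]. f_equal; lia.
      * rewrite simpl_lift by lia. auto.
Qed.

Lemma subst_inst : forall s k u sg,
  subst k u (inst (upn (S k) sg) s) = inst (upn k (scons u sg)) s.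
Proof.
  induction s as [m| s IH | s1 IH1 s2 IH2 s3 IH3]; intros k u sg; cbn [inst].
  - rewrite !upn_spec. destruct (Nat.ltb_spec m (S k)).
    + cbn [subst]. destruct (Nat.ltb_spec m k); auto.
      cmp1; [|lia]. subst. rewrite Nat.sub_diag. auto.
    + cmp1; [lia|]. rewrite simpl_subst by lia.
      replace (m - k) with (S (m - S k)) by lia. auto.
  - cbn [subst]. f_equal. apply (IH (S k)).
  - cbn [subst]. f_equal; [apply IH1|apply IH2|apply (IH3 (S k))].
Qed.

Lemma inst_id : forall t sg, (forall n, sg n = Var n) -> inst sg t = t.
Proof.
  assert (Hup : forall sg, (forall n, sg n = Var n) -> forall n, up sg n = Var n).
  { intros sg H [|n]; unfold up, scons; auto. rewrite H. cbn [lift]. simpl. f_equal; lia. }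
  induction t; intros sg H; cbn [inst]; f_equal; auto.
Qed.

Lemma adequacy : forall G t A, typing G t A -> forall sg,
  (forall n B, nth_error G n = Some B -> Rd B (sg n)) -> Rd A (inst sg t).
Proof.
  induction 1; intros sg Hs; cbn [inst].
  - apply Hs; auto.
  - intros u Hu. apply (WHE_R B nil). apply (proj1 (CR A)); auto.
    change (up sg) with (upn 1 sg). simpl apps. rewrite subst_inst. simpl upn.
    apply IHtyping. intros [|n] B' HB; simpl in HB.
    + inversion HB; subst; auto.
    + apply Hs; auto.
  - assert (Ha : Rd B (GApp (inst sg t) (inst sg u) (Var 0))).
    { exact (IHtyping1 sg Hs (inst sg u) (IHtyping2 sg Hs)). }
    apply (KL_R C nil). apply (proj1 (CR B)); auto.
    change (up sg) with (upn 1 sg). simpl apps. rewrite subst_inst. simpl upn.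
    apply IHtyping3. intros [|n] B' HB; simpl in HB.
    + inversion HB; subst; auto.
    + apply Hs; auto.
Qed.

Theorem mainTheorem1 : forall (G : ctx) (t : term) (A : ty),
  typing G t A -> SN_dbeta t.
Proof.
  intros G t A H. unfold SN_dbeta.
  pose proof (adequacy G t A H Var) as Hr.
  rewrite inst_id in Hr by auto.
  apply (proj1 (CR A)). apply Hr.
  intros n B _. apply (proj2 (CR B) n nil). constructor.
Qed.
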